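(* Let $G$ be a countably infinite graph and let $h:\mathbb{N}\to\mathbb{N}$. Then $h$ is online computable from the isomorphism type of $G$ if and only if $h$ is primitive recursive.
   Context: A presentation of $G$ is a graph with vertex set $\mathbb{N}$ isomorphic to $G$. For a presentation $\alpha$ and $m\in\mathbb{N}$, let $\alpha\upharpoonright m$ denote the finite string coding the induced subgraph of $\alpha$ on the vertices $\{0,\dots,m-1\}$ (listing, for each vertex, its adjacencies with the earlier vertices). A function $h:\mathbb{N}\to\mathbb{N}$ is online computable from the isomorphism type of $G$ if there are primitive recursive functions $u:\mathbb{N}\to\mathbb{N}$ (the use) and $F$ such that for every presentation $\alpha$ of $G$ and every $i$, $h(i)=F(\alpha\upharpoonright u(i), i)$. (Equivalently, $h$ is computed from every presentation $\alpha$ by a single primitive recursive functional with oracle $\alpha$; by the robustness lemma such a functional has a primitive recursive use, since the space of presentations is primitively recursively branching.) *)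

(* Defs.v *)
From mathcomp Require Import all_boot.
Set Implicit Arguments. Unset Strict Implicit. Unset Printing Implicit Defensive.

(* [PRk k f] : f, viewed as a function of k natural-number arguments
   (given as a list of length k; values on lists of other lengths are
   irrelevant), is primitive recursive. *)
Definition prim_rec_op (g : seq nat -> nat) (h : seq nat -> nat)
  (v : seq nat) : nat :=
  let w := behead v in
  nat_rec (fun _ => nat) (g w) (fun n r => h [:: n, r & w]) (head 0 v).

Inductive PRk : nat -> (seq nat -> nat) -> Prop :=
| PRk_zero k : PRk k (fun _ => 0)
| PRk_succ : PRk 1 (fun v => (nth 0 v 0).+1)
| PRk_proj k i : i < k -> PRk k (fun v => nth 0 v i)
| PRk_comp k m (g : seq nat -> nat) (hs : seq (seq nat -> nat)) :
    size hs = m -> PRk m g ->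
    (forall j, j < m -> PRk k (nth (fun _ => 0) hs j)) ->
    PRk k (fun v => g (map (fun h => h v) hs))
| PRk_rec k (g h : seq nat -> nat) :
    PRk k g -> PRk k.+2 h -> PRk k.+1 (prim_rec_op g h)
| PRk_ext k (f f' : seq nat -> nat) :
    PRk k f -> (forall v, size v = k -> f v = f' v) -> PRk k f'.

Definition prim_rec1 (h : nat -> nat) : Prop := PRk 1 (fun v => h (nth 0 v 0)).
Definition prim_rec2 (F : nat -> nat -> nat) : Prop :=
  PRk 2 (fun v => F (nth 0 v 0) (nth 0 v 1)).

Definition simple_graph (V : Type) (E : V -> V -> Prop) : Prop :=
  (forall x y, E x y -> E y x) /\ (forall x, ~ E x x).

Definition countably_infinite (V : Type) : Prop :=
  exists f : nat -> V, bijective f.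

Definition presentation (V : Type) (E : V -> V -> Prop)
  (alpha : nat -> nat -> bool) : Prop :=
  exists f : nat -> V, bijective f /\ forall x y, alpha x y <-> E (f x) (f y).

(* Code of a finite binary string: b_0 ... b_{L-1} |-> 2^L + sum b_i 2^i. *)
Definition bits_code (s : seq bool) : nat :=
  foldr (fun (b : bool) n => b + n.*2) 1 s.

(* alpha |` m : for each vertex j < m (in order), its adjacencies with the
   earlier vertices k < j. *)
Definition restr_string (alpha : nat -> nat -> bool) (m : nat) : seq bool :=
  flatten [seq [seq alpha j k | k <- iota 0 j] | j <- iota 0 m].

Definition restr_code (alpha : nat -> nat -> bool) (m : nat) : nat :=
  bits_code (restr_string alpha m).

Definition online_computable (V : Type) (E : V -> V -> Prop)
  (h : nat -> nat) : Prop :=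
  exists (u : nat -> nat) (F : nat -> nat -> nat),
    prim_rec1 u /\ prim_rec2 F /\
    forall alpha, presentation E alpha ->
      forall i, h i = F (restr_code alpha (u i)) i.

(* Main.v *)
Require Import Defs.
From mathcomp Require Import all_boot.
From mathcomp Require Import zify.
Set Implicit Arguments. Unset Strict Implicit.

Lemma PR_comp1 k (g : nat -> nat) (f : seq nat -> nat) :
  PRk 1 (fun v => g (nth 0 v 0)) -> PRk k f -> PRk k (fun v => g (f v)).
Proof.
move=> Hg Hf.
apply: (PRk_ext (PRk_comp (hs := [:: f]) (k := k) (m := 1) erefl Hg _)).
  by case=> //= _; exact: Hf.
by [].
Qed.

Lemma PR_comp2 k (g : nat -> nat -> nat) (f1 f2 : seq nat -> nat) :
  PRk 2 (fun v => g (nth 0 v 0) (nth 0 v 1)) -> PRk k f1 -> PRk k f2 ->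
  PRk k (fun v => g (f1 v) (f2 v)).
Proof.
move=> Hg H1 H2.
apply: (PRk_ext (PRk_comp (hs := [:: f1; f2]) (k := k) (m := 2) erefl Hg _)).
  by case=> [|[|]] //= _.
by [].
Qed.

Lemma PR_proj k i : i < k -> PRk k (fun v => nth 0 v i).
Proof. exact: PRk_proj. Qed.

Lemma PR_const1 k : PRk k (fun _ => 1).
Proof.
apply: (PR_comp1 (g := S)); last exact: PRk_zero.
exact: PRk_succ.
Qed.

Lemma PR_add : PRk 2 (fun v => nth 0 v 0 + nth 0 v 1).
Proof.
have Hh : PRk 3 (fun v => (nth 0 v 1).+1).
  by apply: (PR_comp1 (g := S)); [exact: PRk_succ | exact: PR_proj].
apply: (PRk_ext (PRk_rec (PR_proj (k := 1) (i := 0) erefl) Hh)).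
case=> [|x [|y [|]]] //= _.
rewrite /prim_rec_op /=.
by elim: x => //= x ->.
Qed.

Lemma PR_mul : PRk 2 (fun v => nth 0 v 0 * nth 0 v 1).
Proof.
have Hh : PRk 3 (fun v => nth 0 v 1 + nth 0 v 2).
  by apply: (PR_comp2 (g := addn)); [exact: PR_add | exact: PR_proj | exact: PR_proj].
apply: (PRk_ext (PRk_rec (PRk_zero 1) Hh)).
case=> [|x [|y [|]]] //= _.
rewrite /prim_rec_op /=.
elim: x => //= x ->; rewrite mulSn; lia.
Qed.

Lemma PR_pred : PRk 1 (fun v => (nth 0 v 0).-1).
Proof.
apply: (PRk_ext (PRk_rec (PRk_zero 0) (PR_proj (k := 2) (i := 0) erefl))).
case=> [|x [|]] //= _.
by rewrite /prim_rec_op /=; case: x.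
Qed.

Lemma PR_pow2 : PRk 1 (fun v => 2 ^ (nth 0 v 0)).
Proof.
have Hh : PRk 2 (fun v => nth 0 v 1 + nth 0 v 1).
  by apply: (PR_comp2 (g := addn)); [exact: PR_add | exact: PR_proj | exact: PR_proj].
apply: (PRk_ext (PRk_rec (PR_const1 0) Hh)).
case=> [|x [|]] //= _.
rewrite /prim_rec_op /=.
elim: x => //= x ->; rewrite expnS; lia.
Qed.

Fixpoint Lm (m : nat) : nat := if m is m'.+1 then Lm m' + m' else 0.

Lemma PR_P : PRk 1 (fun v => 2 ^ Lm (nth 0 v 0)).
Proof.
have Hh : PRk 2 (fun v => nth 0 v 1 * 2 ^ (nth 0 v 0)).
  apply: (PR_comp2 (g := muln)); [exact: PR_mul | exact: PR_proj |].
  by apply: (PR_comp1 (g := fun x => 2 ^ x)); [exact: PR_pow2 | exact: PR_proj].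
apply: (PRk_ext (PRk_rec (PR_const1 0) Hh)).
case=> [|x [|]] //= _.
rewrite /prim_rec_op /=.
by elim: x => //= x ->; rewrite expnD.
Qed.

Lemma PR_T : PRk 1 (fun v => (2 ^ Lm (nth 0 v 0) + 2 ^ Lm (nth 0 v 0)).-1).
Proof.
apply: (PR_comp1 (g := predn)); first exact: PR_pred.
by apply: (PR_comp2 (g := addn)); [exact: PR_add | exact: PR_P | exact: PR_P].
Qed.

From Stdlib Require Import ClassicalEpsilon Classical.

Definition hom (r : rel nat) (c : bool) (t : seq nat) :=
  forall x y, x \in t -> y \in t -> x != y -> r x y = c.

Lemma ramsey (r : rel nat) : (forall x y, r x y = r y x) ->
  forall n a b (s : seq nat), a + b = n -> uniq s -> 2 ^ (a + b) <= size s ->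
  (exists t, [/\ uniq t, size t = a, {subset t <= s} & hom r true t]) \/
  (exists t, [/\ uniq t, size t = b, {subset t <= s} & hom r false t]).
Proof.
move=> rsym; elim=> [|n IH] a b s Hn Hu Hs.
  have -> : a = 0 by lia.
  by left; exists [::]; split.
case: a Hn Hs => [|a] Hn Hs.
  by left; exists [::]; split.
case: b Hn Hs => [|b] Hn Hs.
  by right; exists [::]; split.
case: s Hu Hs => [|x s] Hu Hs; first by have := expn_gt0 2 (a.+1 + b.+1); move: Hs => /=; lia.
move: Hu => /= /andP [xs Hu].
have Hsz := size_filter (r x) s.
have Hc := count_predC (r x) s.
have Hp : 2 ^ (a.+1 + b.+1) = 2 ^ (a + b.+1) + 2 ^ (a + b.+1).
  by rewrite addSn expnS; lia.
case: (leqP (2 ^ (a + b.+1)) (size (filter (r x) s))) => HN.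
  have [[t [tu ts tsub th]]|[t [tu ts tsub th]]] :=
    IH a b.+1 (filter (r x) s) ltac:(lia) (filter_uniq _ Hu) HN.
    left; exists (x :: t); split.
    - rewrite /= tu andbT; apply/negP => /tsub; rewrite mem_filter => /andP [_].
      by rewrite (negbTE xs).
    - by rewrite /= ts.
    - move=> y; rewrite inE => /orP [/eqP ->|/tsub]; first by rewrite inE eqxx.
      by rewrite mem_filter => /andP [_ ys]; rewrite inE ys orbT.
    - move=> y z; rewrite !inE => /orP [/eqP ->|yt] /orP [/eqP ->|zt] yz.
      + by rewrite eqxx in yz.
      + by move: (tsub _ zt); rewrite mem_filter => /andP [].
      + by rewrite rsym; move: (tsub _ yt); rewrite mem_filter => /andP [].
      + exact: th.
  right; exists t; split => //.
  by move=> y /tsub; rewrite mem_filter => /andP [_ ys]; rewrite inE ys orbT.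
have HM : 2 ^ (a.+1 + b) <= size (filter (predC (r x)) s).
  have := size_filter (predC (r x)) s; move: Hs HN Hsz Hc => /=; rewrite Hp; rewrite addSn -addnS; lia.
have [[t [tu ts tsub th]]|[t [tu ts tsub th]]] :=
  IH a.+1 b (filter (predC (r x)) s) ltac:(lia) (filter_uniq _ Hu) HM.
  left; exists t; split => //.
  by move=> y /tsub; rewrite mem_filter => /andP [_ ys]; rewrite inE ys orbT.
right; exists (x :: t); split.
- rewrite /= tu andbT; apply/negP => /tsub; rewrite mem_filter => /andP [_].
  by rewrite (negbTE xs).
- by rewrite /= ts.
- move=> y; rewrite inE => /orP [/eqP ->|/tsub]; first by rewrite inE eqxx.
  by rewrite mem_filter => /andP [_ ys]; rewrite inE ys orbT.
- move=> y z; rewrite !inE => /orP [/eqP ->|yt] /orP [/eqP ->|zt] yz.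
  + by rewrite eqxx in yz.
  + by move: (tsub _ zt); rewrite mem_filter => /andP [/= /negbTE].
  + by rewrite rsym; move: (tsub _ yt); rewrite mem_filter => /andP [/= /negbTE].
  + exact: th.
Qed.

Lemma hom_all (r : rel nat) : (forall x y, r x y = r y x) ->
  exists c, forall m, exists t, [/\ uniq t, size t = m & hom r c t].
Proof.
move=> rsym.
case: (classic (forall m, exists t, [/\ uniq t, size t = m & hom r false t])) => H.
  by exists false.
have [b0 Hb0] := not_all_ex_not _ _ H.
exists true => m.
have [[t [tu ts _ th]]|[t [tu ts _ th]]] :=
  ramsey rsym erefl (iota_uniq 0 (2 ^ (m + b0))) (eq_leq (esym (size_iota _ _))).
- by exists t.
- by case: Hb0; exists t.
Qed.

Definition sw (a b k : nat) := if k == a then b else if k == b then a else k.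

Lemma swK a b : cancel (sw a b) (sw a b).
Proof.
move=> k; rewrite /sw.
case: (eqVneq k a) => [->|ka].
  by rewrite eqxx; case: (eqVneq b a) => [->|ba]; rewrite ?eqxx.
case: (eqVneq k b) => [->|kb]; first by rewrite eqxx.
by rewrite (negbTE ka) (negbTE kb).
Qed.

Lemma perm_exists (t : seq nat) : uniq t ->
  exists p : nat -> nat, bijective p /\ forall j, j < size t -> p j = nth 0 t j.
Proof.
elim/last_ind: t => [|t x IH].
  by move=> _; exists id; split=> //; exists id.
rewrite rcons_uniq => /andP [xt tu].
have [p [[g pg gp] Hp]] := IH tu.
exists (p \o sw (size t) (g x)); split.
  by apply: bij_comp; [exists g | exists (sw (size t) (g x)); exact: swK].
move=> j; rewrite size_rcons ltnS leq_eqVlt => /orP [/eqP ->|jt].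
  by rewrite /= /sw eqxx gp nth_rcons ltnn eqxx.
have jgx : j != g x.
  apply/eqP => E; move: xt; rewrite -(gp x) -E Hp // mem_nth //.
rewrite /= /sw (negbTE jgx) ifN; last by rewrite neq_ltn jt.
by rewrite Hp // nth_rcons jt.
Qed.

Lemma restr_const (alpha : nat -> nat -> bool) c m :
  (forall j k, k < j < m -> alpha j k = c) ->
  restr_string alpha m = nseq (Lm m) c.
Proof.
elim: m => [|m IH] H //.
rewrite /restr_string -addn1 iotaD map_cat flatten_cat /= cats0 add0n.
rewrite -/(restr_string alpha m) IH; last by move=> j k /andP [kj jm]; apply: H; rewrite kj /= ltnS ltnW.
rewrite addn1 /= nseqD; congr (_ ++ _).
rewrite -{3}(size_iota 0 m); apply: (@eq_from_nth _ c).
  by rewrite size_map !size_iota size_nseq.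
move=> i; rewrite size_map => Hi.
rewrite (nth_map 0) //; rewrite size_iota in Hi; rewrite nth_iota // nth_nseq.
by rewrite if_same add0n H // Hi /=.
Qed.

Lemma bits_false L : bits_code (nseq L false) = 2 ^ L.
Proof. by elim: L => //= L ->; rewrite expnS add0n -mul2n. Qed.

Lemma bits_true L : bits_code (nseq L true) = (2 ^ L + 2 ^ L).-1.
Proof.
elim: L => //= L ->; rewrite expnS.
have := expn_gt0 2 L; lia.
Qed.

Theorem mainTheorem2 (V : Type) (E : V -> V -> Prop)
  (hG : simple_graph E) (hV : countably_infinite V) (h : nat -> nat) :
  online_computable E h <-> prim_rec1 h.
Proof.
split.
- move=> [u [F [Hu [HF Hh]]]].
  have [f [g fg gf]] := hV.
  pose r : rel nat := fun x y =>
    if excluded_middle_informative (E (f x) (f y)) then true else false.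
  have rE x y : r x y <-> E (f x) (f y).
    by rewrite /r; case: excluded_middle_informative.
  have rsym x y : r x y = r y x.
    rewrite /r; case: excluded_middle_informative => H1;
      case: excluded_middle_informative => H2 //.
    + by case: H2; apply: hG.1.
    + by case: H1; apply: hG.1.
  have [c Hc] := hom_all rsym.
  pose C m := if c then (2 ^ Lm m + 2 ^ Lm m).-1 else 2 ^ Lm m.
  have key i : h i = F (C (u i)) i.
    have [t [tu ts th]] := Hc (u i).
    have [p [pb Hp]] := perm_exists tu.
    pose alpha x y := r (p x) (p y).
    have pres : presentation E alpha.
      exists (f \o p); split; first by apply: bij_comp => //; exists g.
      by move=> x y; exact: rE.
    rewrite (Hh _ pres) /restr_code (@restr_const _ c).
      by rewrite /C; case: (c) {Hc th}; rewrite ?bits_true ?bits_false.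
    move=> j k /andP [kj jm]; rewrite /alpha !Hp ?ts; [|lia|lia].
    apply: th; rewrite ?mem_nth ?nth_uniq ?ts //; try lia.
  have HC : PRk 1 (fun v => C (nth 0 v 0)).
    by rewrite /C; case: (c); [exact: PR_T | exact: PR_P].
  apply: (PRk_ext (PR_comp2 (g := F) HF (PR_comp1 (g := C) HC Hu)
                           (PR_proj (k := 1) (i := 0) erefl))).
  by move=> v _; rewrite key.
- move=> Hh; exists (fun _ => 0), (fun _ i => h i); split; first exact: PRk_zero.
  split => //.
  exact: (PR_comp1 (g := h) Hh (PR_proj (k := 2) (i := 1) erefl)).
Qed.
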